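(* Let $D$ be a reduced knot diagram, let $2\le k<\infty$, and fix a version of the $k$-color region select game on $D$ and a checkerboard shading of $D$. Let $r_1$ be a shaded region and $r_2$ an unshaded region. (i) If $k=2^t$ for some integer $t\ge1$, then every color configuration has a unique solving pattern in which $r_1$ and $r_2$ are not pushed. (ii) If $k$ is not a power of $2$, let $p$ be the smallest odd prime factor of $k$. If $d(r_1,r_2)<p$, then every color configuration has a unique solving pattern in which $r_1$ and $r_2$ are not pushed.
   Context: Diagrams: a link (knot) diagram $D$ is the underlying graph of a regular projection of a link (knot) into $S^2$. Its vertices are the crossings, each of valence 4, and over/under information is ignored. Components without crossings are closed loops, each regarded as one edge with no vertices. Regions of $D$ are the connected components of $S^2\setminus D$. A vertex or edge is incident to a region if it lies in the boundary of that region. Two regions are adjacent if they are incident to a common edge. A vertex $v$ is reducible if some circle in $S^2$ meets $D$ transversely only at $v$, and irreducible otherwise. An irreducible vertex is incident to four distinct regions. A reducible vertex $v$ is incident to exactly three regions $r_0,r_1,r_2$, where $r_0$ touches $v$ from two sides and $r_1,r_2$ touch it from one side. A knot diagram with $n$ vertices has $n+2$ regions. A knot diagram is reduced if all its vertices are irreducible. Ring: for an integer $k\ge2$ let $\mathbb{Z}_k=\mathbb{Z}/k\mathbb{Z}$, and for $k=\infty$ let $\mathbb{Z}_\infty=\mathbb{Z}$. Game versions: a version of the $k$-color region select game on $D$ is a choice of an increment number $a(v,r)\in\mathbb{Z}_k$ for every incident vertex–region pair, subject to the following rules. - If $k<\infty$ and $v$ is irreducible, then $a(v,r)=a_v$ is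 the same for all regions $r$ incident to $v$, and $a_v$ is not a zero divisor of $\mathbb{Z}_k$. - If $k<\infty$ and $v$ is reducible, then $a(v,r_0)$ is arbitrary, while $a(v,r_1)$ and $a(v,r_2)$ are not zero divisors. - If $k=\infty$, then $a(v,r)=1$, except that $a(v,r_0)\in\mathbb{Z}$ is arbitrary when $v$ is reducible. - The original game is the version in which all increment numbers equal $1$. Game matrix: enumerate the vertices as $v_1,\dots,v_n$ and the regions as $r_1,\dots,r_m$. The game matrix is the $n\times m$ matrix $M$ over $\mathbb{Z}_k$ with $M_{ij}=a(v_i,r_j)$ if $v_i$ is incident to $r_j$, and $M_{ij}=0$ otherwise. Patterns and configurations: a push pattern is a vector $\mathbf p\in\mathbb{Z}_k^m$, and $\mathbf p(r_j)=p_j$ is the number of times $r_j$ is pushed. A region $r$ is not pushed in $\mathbf p$ if $\mathbf p(r)=0$. A color configuration is a vector $\mathbf c\in\mathbb{Z}_k^n$. Applying $\mathbf p$ to $\mathbf c$ yields $\mathbf c+M\mathbf p$. The configuration $\mathbf c$ is solvable if some $\mathbf p$ satisfies $M\mathbf p=-\mathbf c$; such a $\mathbf p$ is a solving pattern for $\mathbf c$. $D$ is always solvable in the version if every $\mathbf c\in\mathbb{Z}_k^n$ is solvable. A null pattern is an element of $Ker_k(M)=\{\mathbf p\in\mathbb{Z}_k^m: M\mathbf p=0\}$. Checkerboard shading: a checkerboard shading of $D$ is a shading of some of its regions such that, of any two adjacent regions, exactly one is shaded. Distance: the dual graph of $D$ has one vertex per region, with an edge between the vertices of each pair of adjacent regions.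 The distance $d(r_1,r_2)$ is the graph distance between the corresponding vertices of the dual graph. *)

(* Defs.v *)
From HB Require Import structures.
From mathcomp Require Import all_boot all_order all_algebra.
Set Implicit Arguments.
Unset Strict Implicit.
Unset Printing Implicit Defensive.
Import GRing.Theory.

(* Combinatorial encoding of a (link/knot) diagram on S^2 as a 4-regular
   combinatorial map.  The vertices (crossings) form a finite type V; the
   darts (half-edges) are the pairs (v, i) with i : 'I_4, numbered in
   counterclockwise cyclic order around v, so rotation is i |-> i+1 mod 4.
   alpha : darts -> darts is the fixed-point-free involution matching the two
   half-edges of each edge.  The dart (v,i) also names the corner of v between
   the half-edges (v,i) and (v,i+1).  Corners are grouped into regions
   (faces) by the face permutation phi = alpha o rot; the regions form a finite
   type F and face : darts -> F sends a corner to the region containing it. *)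

Definition rot (V : finType) (d : V * 'I_4) : V * 'I_4 := (d.1, ordS d.2).
Definition rotinv (V : finType) (d : V * 'I_4) : V * 'I_4 := (d.1, ord_pred d.2).

Definition face_perm (V : finType) (alpha : V * 'I_4 -> V * 'I_4) (d : V * 'I_4) :=
  alpha (rot d).

(* straight-ahead walk through crossings: leave along d, arrive at alpha d,
   continue along the opposite half-edge *)
Definition straight (V : finType) (alpha : V * 'I_4 -> V * 'I_4) (d : V * 'I_4) :=
  let e := alpha d in (e.1, ordS (ordS e.2)).

(* (alpha, face) is a knot diagram on S^2 (with at least one crossing):
   - alpha is a fixed-point-free involution (edges);
   - face identifies exactly the orbits of the face permutation, and every
     region contains a corner;
   - the straight-ahead walk has a single component (a knot, not a link);
     this also forces the map to be connected;
   - Euler's formula for the sphere: #V - #E + #F = 2 with #E = 2 #V. *)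
Definition is_knot_diagram (V F : finType) (alpha : V * 'I_4 -> V * 'I_4)
    (face : V * 'I_4 -> F) : Prop :=
  (forall d, alpha (alpha d) = d) /\
  (forall d, alpha d != d) /\
  (forall d d', (face d == face d') = fconnect (face_perm alpha) d d') /\
  (forall r : F, exists d, face d = r) /\
  (forall d d', fconnect (straight alpha) d d' || fconnect (straight alpha) d (alpha d')) /\
  #|F| = (#|V| + 2)%N.

Definition incident (V F : finType) (face : V * 'I_4 -> F) (v : V) (r : F) : bool :=
  [exists i : 'I_4, face (v, i) == r].

Definition irreducible_vertex (V F : finType) (face : V * 'I_4 -> F) (v : V) : bool :=
  [forall i : 'I_4, forall j : 'I_4, (face (v, i) == face (v, j)) ==> (i == j)].

Definition reduced_diagram (V F : finType) (face : V * 'I_4 -> F) : Prop :=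
  forall v, irreducible_vertex face v.

(* adjacency of regions: incident to a common edge.  The two sides of the
   edge containing the half-edge d are the regions of the corners d and
   rotinv d. *)
Definition adjacent (V F : finType) (face : V * 'I_4 -> F) (r r' : F) : bool :=
  [exists d : V * 'I_4, (face d == r) && (face (rotinv d) == r')].

Definition checkerboard (V F : finType) (face : V * 'I_4 -> F) (shade : F -> bool) : Prop :=
  forall r r', r != r' -> adjacent face r r' -> shade r != shade r'.

(* distance in the dual graph: least length of a walk from r1 to r2
   (walks longer than #|F| are never needed; returns #|F| if unreachable) *)
Definition dual_dist (V F : finType) (face : V * 'I_4 -> F) (r1 r2 : F) : nat :=
  find (fun m => [exists s : m.-tuple F, path (adjacent face) r1 s && (last r1 s == r2)])
       (iota 0 #|F|).

Definition not_zero_divisor (k : nat) (a : 'Z_k) : Prop :=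
  forall x : 'Z_k, (a * x = 0)%R -> x = 0%R.

Definition is_version (k : nat) (V F : finType) (face : V * 'I_4 -> F)
    (a : V -> F -> 'Z_k) : Prop :=
  forall v : V,
    (irreducible_vertex face v ->
       (forall r r', incident face v r -> incident face v r' -> a v r = a v r') /\
       (forall r, incident face v r -> not_zero_divisor (a v r))) /\
    (~~ irreducible_vertex face v ->
       forall i : 'I_4, (forall j : 'I_4, face (v, j) = face (v, i) -> j = i) ->
         not_zero_divisor (a v (face (v, i)))).

Definition game_matrix (k : nat) (V F : finType) (face : V * 'I_4 -> F)
    (a : V -> F -> 'Z_k) (v : V) (r : F) : 'Z_k :=
  if incident face v r then a v r else 0%R.

Definition solving (k : nat) (V F : finType) (face : V * 'I_4 -> F)
    (a : V -> F -> 'Z_k) (c : {ffun V -> 'Z_k}) (p : {ffun F -> 'Z_k}) : Prop :=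
  forall v : V, (\sum_(r : F) game_matrix face a v r * p r)%R = (- c v)%R.

Definition unique_solving (k : nat) (V F : finType) (face : V * 'I_4 -> F)
    (a : V -> F -> 'Z_k) (r1 r2 : F) : Prop :=
  forall c : {ffun V -> 'Z_k},
    exists! p : {ffun F -> 'Z_k}, (p r1 = 0%R /\ p r2 = 0%R) /\ solving face a c p.

(* Main.v *)
Require Import Defs.
From mathcomp Require Import all_boot all_order all_algebra.
From mathcomp Require Import ring zify.
From Stdlib Require Import Lia.

Set Implicit Arguments.
Unset Strict Implicit.
Unset Printing Implicit Defensive.
Import GRing.Theory.

Ltac c4 := let i := fresh in let H := fresh in case=> [[|[|[|[|i]]]] H] //.

Lemma o_t1 (i : 'I_4) : ordS (ord_pred i) = i. Proof. apply: val_inj; move: i; c4. Qed.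
Lemma o_t5 (i : 'I_4) : ord_pred i != i. Proof. move: i; c4. Qed.
Lemma o_t6 (i : 'I_4) : ord_pred (ordS (ordS i)) = ordS i. Proof. apply: val_inj; move: i; c4. Qed.
Lemma o_t2 (i j : 'I_4) : exists n, iter n (@ord_pred 4) i = j.
Proof. move: i j; c4; c4; [exists 0|exists 3|exists 2|exists 1|exists 1|exists 0|exists 3|exists 2
  |exists 2|exists 1|exists 0|exists 3|exists 3|exists 2|exists 1|exists 0]; exact: val_inj. Qed.

Lemma sum4 (R : comRingType) (g : 'I_4 -> R) (i : 'I_4) :
  (\sum_j g j = g i + g (ord_pred i) + g (ordS (ordS i)) + g (ordS i))%R.
Proof.
pose G n := g (inord n).
have gE x : g x = G x by rewrite /G inord_val.
rewrite !big_ord_recl big_ord0 !gE /=.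
move: i; c4; rewrite /= /bump /=;
repeat match goal with |- context [G ?e] => let v := eval vm_compute in e in (assert_fails (constr_eq e v); change e with v) end;
ring.
Qed.

Section Knot.
Variables (V F : finType) (alpha : V * 'I_4 -> V * 'I_4) (face : V * 'I_4 -> F).
Hypothesis alphaK : forall d, alpha (alpha d) = d.
Hypothesis faceE : forall d d', (face d == face d') = fconnect (face_perm alpha) d d'.
Hypothesis knot : forall d d', fconnect (straight alpha) d d' || fconnect (straight alpha) d (alpha d').
Hypothesis irr : reduced_diagram face.

Lemma face_fp d : face (face_perm alpha d) = face d.
Proof. by apply/esym/eqP; rewrite faceE fconnect1. Qed.

Lemma rot_rotinv (d : V * 'I_4) : Defs.rot (rotinv d) = d.
Proof. by case: d => v i; rewrite /Defs.rot /rotinv /= o_t1. Qed.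

Lemma face_alpha e : face (alpha e) = face (rotinv e).
Proof. by rewrite -(face_fp (rotinv e)) /face_perm rot_rotinv. Qed.

Lemma face_rotinv_alpha e : face (rotinv (alpha e)) = face e.
Proof. by rewrite -(face_fp (rotinv (alpha e))) /face_perm rot_rotinv alphaK. Qed.

Lemma vertex_spread (P : V * 'I_4 -> Prop) : (forall d, P d -> P (rotinv d)) ->
  forall v i j, P (v, i) -> P (v, j).
Proof.
move=> H v i j; have [n <-] := o_t2 i j; elim: n => //= n IH Pi.
exact: (H (v, _) (IH Pi)).
Qed.

Lemma spread (P : V * 'I_4 -> Prop) : (forall d, P d -> P (rotinv d)) ->
  (forall e, P e -> P (rotinv (alpha e))) -> forall d0, P d0 -> forall d, P d.
Proof.
move=> H1 H2.
have Hv : forall d e, d.1 = e.1 -> P d -> P e.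
  by case=> v i [w j] /= ->; apply: vertex_spread.
have Ha : forall e, P e -> P (alpha e) by move=> e /H2 Pe; apply: Hv Pe.
have Hs : forall d, P d -> P (straight alpha d) by move=> d /Ha Pd; apply: Hv Pd.
move=> d0 P0 d.
have Hit : forall n, P (iter n (straight alpha) d0) by elim=> //= n IH; exact: Hs.
case/orP: (knot d0 d) => [/iter_findex <- //|/iter_findex Ed].
by rewrite -(alphaK d) -Ed; exact: Ha.
Qed.

Lemma face_rotinv_neq d : face d != face (rotinv d).
Proof.
case: d => v i; apply/negP => /eqP E.
move: (irr v) => /forallP/(_ i)/forallP/(_ (ord_pred i)); rewrite /= E eqxx /= => /eqP Ei.
by move: (o_t5 i); rewrite -Ei eqxx.
Qed.

Lemma corner_sum (R : comRingType) (g : F -> R) (v : V) :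
  (\sum_(r | incident face v r) g r = \sum_i g (face (v, i)))%R.
Proof.
have inj : {in [set: 'I_4] &, injective (fun i => face (v, i))}.
  move=> i j _ _ /= E; move: (irr v) => /forallP/(_ i)/forallP/(_ j).
  by rewrite E eqxx /= => /eqP.
transitivity (\sum_(r in [set face (v, i) | i in [set: 'I_4]]) g r)%R.
  apply: eq_bigl => r; rewrite /incident; apply/existsP/imsetP.
    by case=> i /eqP <-; exists i.
  by case=> i _ ->; exists i.
by rewrite big_imset //; apply: eq_bigl => i; rewrite in_setT.
Qed.

Variable (k : nat).
Variable (a : V -> F -> 'Z_k).
Hypothesis vers : is_version face a.

Lemma inc0 v : incident face v (face (v, ord0)).
Proof. by apply/existsP; exists ord0. Qed.

Lemma gm_sum (p : F -> 'Z_k) v :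
  (\sum_r game_matrix face a v r * p r = a v (face (v, ord0)) * \sum_i p (face (v, i)))%R.
Proof.
rewrite /game_matrix (bigID (incident face v)) /=.
rewrite [X in (_ + X)%R]big1 ?addr0; last by move=> r /negbTE ->; rewrite mul0r.
rewrite (eq_bigr (fun r => a v (face (v, ord0)) * p r)%R) => [|r Hr].
  by rewrite -mulr_sumr corner_sum.
by rewrite Hr; congr (_ * _)%R; apply: ((vers v).1 (irr v)).1 => //; apply: inc0.
Qed.

Lemma gm_null (p : F -> 'Z_k) v :
  (\sum_r game_matrix face a v r * p r = 0)%R -> (\sum_i p (face (v, i)) = 0)%R.
Proof.
rewrite gm_sum => H; apply: ((vers v).1 (irr v)).2 H; exact: inc0.
Qed.

Section Null.
Variable p : F -> 'Z_k.
Hypothesis Hc : forall v, (\sum_i p (face (v, i)) = 0)%R.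

Definition fe d := (p (face d) + p (face (rotinv d)))%R.

Lemma F1 v i : fe (v, ordS (ordS i)) = (- fe (v, i))%R.
Proof.
have := Hc v; rewrite (sum4 _ i) /fe /rotinv /= o_t6 => H.
apply/eqP; rewrite -subr_eq0; apply/eqP; rewrite -H; ring.
Qed.

Lemma F2 e : fe (alpha e) = fe e.
Proof. by rewrite /fe face_alpha face_rotinv_alpha addrC. Qed.

Lemma F3 d : fe (straight alpha d) = (- fe d)%R.
Proof. by rewrite /straight /= F1 -surjective_pairing F2. Qed.

Lemma Fpm d1 d : fe d = fe d1 \/ fe d = (- fe d1)%R.
Proof.
have Hit : forall n, fe (iter n (straight alpha) d1) = fe d1 \/
                     fe (iter n (straight alpha) d1) = (- fe d1)%R.
  elim=> [|n IH] /=; first by left.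
  by rewrite F3; case: IH => ->; [right|left; rewrite opprK].
case/orP: (knot d1 d) => [/iter_findex <- //|/iter_findex Ed].
by rewrite -F2 -Ed.
Qed.

Lemma walk_val d1 : p (face d1) = 0%R -> forall s, path (adjacent face) (face d1) s ->
  exists a b, (a + b = size s)%N /\ p (last (face d1) s) = (fe d1 *+ a - fe d1 *+ b)%R.
Proof.
move=> p0; elim/last_ind => [|s x IH].
  by move=> _; exists 0%N, 0%N; rewrite /= p0 subrr.
rewrite rcons_path last_rcons size_rcons => /andP[/IH [a0 [b0 [Hab Hl]]]].
case/existsP => d /andP[/eqP Hd /eqP Hx].
have Ex : p x = (fe d - p (last (face d1) s))%R by rewrite /fe Hd Hx; ring.
case: (Fpm d1 d) => Efd; [exists b0.+1, a0 | exists b0, a0.+1]; split;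
  rewrite ?Ex ?Efd ?Hl ?mulrS; try ring; rewrite -Hab; lia.
Qed.

End Null.

Variable shade : F -> bool.
Hypothesis checker : checkerboard face shade.

Lemma walk_parity r1 s : path (adjacent face) r1 s ->
  shade (last r1 s) = odd (size s) (+) shade r1.
Proof.
elim/last_ind: s => [|s x IH] /=; first by case: (shade r1).
rewrite rcons_path last_rcons size_rcons => /andP[/IH {}IH Ha].
have Hne : last r1 s != x.
  case/existsP: Ha => d /andP[/eqP Hd /eqP Hx]; rewrite -Hd -Hx; exact: face_rotinv_neq.
have := checker Hne Ha; rewrite IH /=.
by case: (shade x); case: (odd (size s)); case: (shade r1).
Qed.

Hypothesis facesurj : forall r : F, exists d, face d = r.

Lemma connected r1 r : connect (adjacent face) r1 r.
Proof.
have [d1 E1] := facesurj r1; have [d Ed] := facesurj r; rewrite -E1 -Ed.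
apply: (@spread (fun d => connect (adjacent face) (face d1) (face d))) => //.
- move=> e He; apply: connect_trans He _; apply: connect1; apply/existsP; exists e.
  by rewrite !eqxx.
- by move=> e; rewrite face_rotinv_alpha.
Qed.

Variables r1 r2 : F.
Hypotheses (sh1 : shade r1) (sh2 : ~~ shade r2) (hk : (1 < k)%N).
Hypothesis cardF : #|F| = (#|V| + 2)%N.

Lemma null_zero (s : seq F) : path (adjacent face) r1 s -> last r1 s = r2 ->
  (forall m, odd m -> (0 < m)%N -> (m <= size s)%N -> coprime k m) ->
  forall q : F -> 'Z_k, q r1 = 0%R -> q r2 = 0%R ->
  (forall v, (\sum_r game_matrix face a v r * q r = 0)%R) -> forall r, q r = 0%R.
Proof.
move=> Hp Hl Hcop q q1 q2 Hq.
have Hc : forall v, (\sum_i q (face (v, i)) = 0)%R by move=> v; apply: gm_null.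
have [d1 E1] := facesurj r1.
have Hodd : odd (size s).
  move: (walk_parity Hp); rewrite Hl; move: sh1 sh2.
  by case: (shade r1); case: (shade r2); case: odd.
rewrite -E1 in Hp Hl q1.
have [a0 [b0 [Hab Hv]]] := walk_val Hc q1 Hp.
rewrite Hl q2 in Hv.
set x := fe q d1 in Hv.
have Eab : (x *+ a0 = x *+ b0)%R by apply/eqP; rewrite -subr_eq0 -Hv.
have key : forall m, odd m -> (0 < m)%N -> (m <= size s)%N -> (x *+ m = 0)%R -> x = 0%R.
  move=> m om m0 ms E.
  have U : ((m%:R)%R : 'Z_k) \is a GRing.unit by rewrite unitZpE // Hcop.
  by have := congr1 (fun z => z / m%:R)%R E; rewrite /= mul0r -[(x *+ m)%R]mulr_natr (mulrK U).
have x0 : x = 0%R.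
  case: (ltngtP a0 b0) => Hab'.
  - apply: (key (b0 - a0)%N).
    + by rewrite (oddB (ltnW Hab')) addbC -oddD Hab.
    + by rewrite subn_gt0.
    + by rewrite -Hab (leq_trans (leq_subr _ _) (leq_addl _ _)).
    + by rewrite (mulrnBr _ (ltnW Hab')) Eab subrr.
  - apply: (key (a0 - b0)%N).
    + by rewrite (oddB (ltnW Hab')) -oddD Hab.
    + by rewrite subn_gt0.
    + by rewrite -Hab (leq_trans (leq_subr _ _) (leq_addr _ _)).
    + by rewrite (mulrnBr _ (ltnW Hab')) Eab subrr.
  - by move: Hodd; rewrite -Hab Hab' oddD addbb.
have fe0 : forall d, fe q d = 0%R.
  by move=> d; case: (Fpm Hc d1 d); rewrite -/x x0 ?oppr0.
have Hall : forall d, q (face d) = 0%R.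
  apply: (@spread (fun d => q (face d) = 0%R)) q1.
  - by move=> d Pd; have := fe0 d; rewrite /fe Pd add0r.
  - by move=> e; rewrite face_rotinv_alpha.
by move=> r; have [d <-] := facesurj r.
Qed.

Lemma unique_sol (s : seq F) : path (adjacent face) r1 s -> last r1 s = r2 ->
  (forall m, odd m -> (0 < m)%N -> (m <= size s)%N -> coprime k m) ->
  unique_solving face a r1 r2.
Proof.
move=> Hp Hl Hcop.
have nz := null_zero Hp Hl Hcop.
move=> c.
have r12 : r1 != r2 by apply/eqP=> E; move: sh2; rewrite -E sh1.
pose P r := (r != r1) && (r != r2).
have cardE : #|{: {r : F | P r}}| = #|V|.
  rewrite card_sig.
  have -> : #|[pred r | P r]| = #|[predD1 (predC1 r1) & r2]|.
    by apply: eq_card => r; rewrite !inE /P andbC.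
  have := cardD1 r2 (predC1 r1); rewrite cardC1 !inE eq_sym r12 cardF /=.
  by rewrite addnS /= addn1 add1n => -[->].
pose hinv (r : {r : F | P r}) : V := enum_val (cast_ord cardE (enum_rank r)).
have hsurj v : hinv (enum_val (cast_ord (esym cardE) (enum_rank v))) = v.
  by rewrite /hinv enum_valK cast_ordKV enum_rankK.
pose ext (q : {ffun V -> 'Z_k}) : {ffun F -> 'Z_k} :=
  [ffun r => if insub r is Some r' then q (hinv r') else 0%R].
have extP q (r' : {r | P r}) : ext q (val r') = q (hinv r') by rewrite ffunE valK.
have ext1 q : ext q r1 = 0%R by rewrite ffunE insubF // /P eqxx.
have ext2 q : ext q r2 = 0%R by rewrite ffunE insubF // /P eqxx andbF.
have lin : forall (p p' : {ffun F -> 'Z_k}) v,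
    (\sum_r game_matrix face a v r * (p r - p' r) =
     \sum_r game_matrix face a v r * p r - \sum_r game_matrix face a v r * p' r)%R.
  move=> p p' v; rewrite -sumrB; apply: eq_bigr => r _; by rewrite mulrBr.
pose L q : {ffun V -> 'Z_k} := [ffun v => - \sum_r game_matrix face a v r * ext q r]%R.
have Linj : injective L.
  move=> q q' E.
  have Z := nz (fun r => ext q r - ext q' r)%R.
  have Z' : forall r, ext q r = ext q' r.
    move=> r; apply/eqP; rewrite -subr_eq0; apply/eqP.
    apply: Z; [by rewrite /= !ext1 subrr | by rewrite /= !ext2 subrr | ].
    move=> v; rewrite lin.
    have := congr1 (fun f : {ffun V -> 'Z_k} => f v) E; rewrite /L !ffunE => /oppr_inj ->.
    by rewrite subrr.
  apply/ffunP => v; rewrite -(hsurj v) -!extP; exact: Z'.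
have [g Lg gL] := injF_bij Linj.
have sol : solving face a c (ext (g c)).
  by move=> v; rewrite -{2}(gL c) /L ffunE opprK.
exists (ext (g c)); split; first by split; [split; [exact: ext1 | exact: ext2] | exact: sol].
move=> p' [[p1 p2] Hs]; apply/ffunP => r.
have := nz (fun r => ext (g c) r - p' r)%R _ _ _ r.
move=> Z; apply/eqP; rewrite -subr_eq0; apply/eqP; apply: Z.
- by rewrite ext1 p1 subrr.
- by rewrite ext2 p2 subrr.
- by move=> v; rewrite lin sol Hs subrr.
Qed.

End Knot.

Theorem mainTheorem13 (k : nat) (V F : finType) (alpha : V * 'I_4 -> V * 'I_4)
    (face : V * 'I_4 -> F) (a : V -> F -> 'Z_k) (shade : F -> bool) (r1 r2 : F) :
  (2 <= k)%N ->
  is_knot_diagram alpha face ->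
  reduced_diagram face ->
  is_version face a ->
  checkerboard face shade ->
  shade r1 -> ~~ shade r2 ->
  (forall t : nat, (1 <= t)%N -> k = (2 ^ t)%N -> unique_solving face a r1 r2) /\
  (~ (exists t : nat, k = (2 ^ t)%N) ->
     forall p : nat, prime p -> odd p -> (p %| k)%N ->
       (forall q : nat, prime q -> odd q -> (q %| k)%N -> (p <= q)%N) ->
       (dual_dist face r1 r2 < p)%N ->
       unique_solving face a r1 r2).
Proof.
move=> k2 [alphaK [_ [faceE [facesurj [knot cardF]]]]] irr vers checker sh1 sh2.
have hk : (1 < k)%N by [].
have conn : forall r, connect (adjacent face) r1 r.
  by move=> r; eapply connected; eauto.
have US : forall s, path (adjacent face) r1 s -> last r1 s = r2 ->
    (forall m, odd m -> (0 < m)%N -> (m <= size s)%N -> coprime k m) ->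
    unique_solving face a r1 r2.
  by move=> s Hp Hl Hc; eapply unique_sol; eauto.
split.
  move=> t t1 kE; have /connectP [s Hp Hl] := conn r2.
  apply: (US s Hp (esym Hl)) => m om _ _.
  by rewrite kE coprime_pexpl // coprime2n.
move=> _ p pp op pk pmin dlt.
have /connectP [s0 Hp0] := conn r2.
case: (shortenP Hp0) => s' Hp' Hu _ Hl'.
have szs : (size s' < #|F|)%N.
  have Hc : #|r1 :: s'| = size (r1 :: s') by apply/card_uniqP.
  by move: (max_card (mem (r1 :: s'))); rewrite Hc.
pose P := fun m => [exists s : m.-tuple F, path (adjacent face) r1 s && (last r1 s == r2)].
have hasP : has P (iota 0 #|F|).
  apply/hasP; exists (size s'); first by rewrite mem_iota.
  by apply/existsP; exists (in_tuple s'); rewrite /= Hp' -Hl' eqxx.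
have fl : (find P (iota 0 #|F|) < #|F|)%N.
  by rewrite -{2}(size_iota 0 #|F|) -has_find.
have := nth_find 0%N hasP; rewrite (nth_iota _ _ fl) add0n.
case/existsP => t /andP[Ht /eqP Hlt].
apply: (US t Ht Hlt) => m om m0 ms.
have dd : size t = dual_dist face r1 r2 by rewrite size_tuple.
rewrite /coprime; case E: (gcdn k m == 1%N) => //.
have g0 : (0 < gcdn k m)%N by rewrite gcdn_gt0 m0 orbT.
have g1 : (1 < gcdn k m)%N by move: g0 E; case: (gcdn k m) => [|[|]].
have qp := pdiv_prime g1.
have qd := pdiv_dvd (gcdn k m).
have qk : (pdiv (gcdn k m) %| k)%N := dvdn_trans qd (dvdn_gcdl _ _).
have qm : (pdiv (gcdn k m) %| m)%N := dvdn_trans qd (dvdn_gcdr _ _).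
have qo : odd (pdiv (gcdn k m)).
  apply/negPn/negP => ev; rewrite -dvdn2 in ev.
  by move: (dvdn_trans ev qm); rewrite dvdn2 om.
have := pmin _ qp qo qk.
have := dvdn_leq m0 qm.
rewrite -dd in dlt.
lia.
Qed.
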